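(* Fix a prompt $x$ and two responses $y_w$ (preferred) and $y_l$ (dispreferred), a constant $\beta>0$, and reference probabilities $a_0=\pi_{ref}(y_w\mid x)\in(0,1)$, $b_0=\pi_{ref}(y_l\mid x)\in(0,1)$. Regard $a=\pi_\theta(y_w\mid x)\in(0,1)$ and $b=\pi_\theta(y_l\mid x)\in(0,1)$ as independent variables and define $$\lambda_w(a,b)=\frac{\log b}{\log a+\log b},\qquad \mathcal{L}_{bdpo}(a,b)=-\log\sigma\!\Big(\beta\lambda_w(a,b)\log\frac{a}{a_0}-\beta\big(1-\lambda_w(a,b)\big)\log\frac{b}{b_0}\Big),$$ where $\sigma(t)=1/(1+e^{-t})$. Then at the point where $\pi_\theta\equiv\pi_{ref}$, i.e. at $(a,b)=(a_0,b_0)$, $$\frac{\partial \mathcal{L}_{bdpo}}{\partial \pi_\theta(y_w\mid x)}\Big/\frac{\partial \mathcal{L}_{bdpo}}{\partial \pi_\theta(y_l\mid x)}=-\frac{\pi_\theta(y_l\mid x)\log\pi_\theta(y_l\mid x)}{\pi_\theta(y_w\mid x)\log\pi_\theta(y_w\mid x)}.$$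
   Context: $\mathcal{L}_{bdpo}$ is the ''Balanced DPO'' loss for a single preference pair $(y_w\succ y_l)$ with prompt $x$; the partial derivatives are with respect to the two probabilities $a=\pi_\theta(y_w\mid x)$ and $b=\pi_\theta(y_l\mid x)$, with $\lambda_w$ also depending on them. *)

(* Defs.v *)
From Stdlib Require Import Reals.
From Coquelicot Require Import Coquelicot.
Open Scope R_scope.

Definition sigmoid (t : R) : R := 1 / (1 + exp (- t)).

Definition lambda_w (a b : R) : R := ln b / (ln a + ln b).

(* Balanced DPO loss as a function of a = pi_theta(y_w|x), b = pi_theta(y_l|x),
   with parameters beta, a0 = pi_ref(y_w|x), b0 = pi_ref(y_l|x). *)
Definition L_bdpo (beta a0 b0 a b : R) : R :=
  - ln (sigmoid (beta * lambda_w a b * ln (a / a0)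
                 - beta * (1 - lambda_w a b) * ln (b / b0))).

(* Main.v *)
Require Import Defs.
From Stdlib Require Import Reals Lra.
From Coquelicot Require Import Coquelicot.
Open Scope R_scope.

Lemma ln_neg (x : R) : 0 < x < 1 -> ln x < 0.
Proof. intros [H1 H2]. rewrite <- ln_1. apply ln_increasing; lra. Qed.

Ltac simp a0 b0 Ha Hb0 :=
  let e1 := fresh in let e2 := fresh in let e3 := fresh in
  assert (e1 : a0 * / a0 = 1) by (field; lra);
  assert (e2 : b0 / b0 = 1) by (field; lra);
  assert (e3 : b0 * / b0 = 1) by (field; lra);
  assert (e4 : a0 / a0 = 1) by (field; lra);
  repeat first [rewrite e1 | rewrite e2 | rewrite e3 | rewrite e4];
  rewrite ?ln_1, ?Rmult_0_r, ?Ropp_0, ?Rplus_0_r, ?Ropp_0, ?exp_0.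

Lemma da (beta a0 b0 : R) : 0 < beta -> 0 < a0 < 1 -> 0 < b0 < 1 ->
 is_derive (fun a => L_bdpo beta a0 b0 a b0) a0 (beta * (-(1/2)) * (ln b0 / ((ln a0 + ln b0) * a0))).
Proof.
intros Hb Ha Hb0.
pose proof (ln_neg a0 Ha). pose proof (ln_neg b0 Hb0).
unfold L_bdpo, sigmoid, lambda_w.
auto_derive; simp a0 b0 Ha Hb0.
- repeat split; try lra. 
- field; repeat split; lra.
Qed.

Lemma db (beta a0 b0 : R) : 0 < beta -> 0 < a0 < 1 -> 0 < b0 < 1 ->
 is_derive (fun b => L_bdpo beta a0 b0 a0 b) b0 (beta * (1/2) * (ln a0 / ((ln a0 + ln b0) * b0))).
Proof.
intros Hb Ha Hb0.
pose proof (ln_neg a0 Ha). pose proof (ln_neg b0 Hb0).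
unfold L_bdpo, sigmoid, lambda_w.
auto_derive; simp a0 b0 Ha Hb0.
- repeat split; try lra.
- field; repeat split; lra.
Qed.

Theorem proposition5p1 (beta a0 b0 : R) :
  0 < beta -> 0 < a0 < 1 -> 0 < b0 < 1 ->
  ex_derive (fun a => L_bdpo beta a0 b0 a b0) a0 /\
  ex_derive (fun b => L_bdpo beta a0 b0 a0 b) b0 /\
  Derive (fun b => L_bdpo beta a0 b0 a0 b) b0 <> 0 /\
  Derive (fun a => L_bdpo beta a0 b0 a b0) a0
    / Derive (fun b => L_bdpo beta a0 b0 a0 b) b0
  = - (b0 * ln b0) / (a0 * ln a0).
Proof.
intros Hb Ha Hb0.
pose proof (ln_neg a0 Ha). pose proof (ln_neg b0 Hb0).
pose proof (da beta a0 b0 Hb Ha Hb0) as DA.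
pose proof (db beta a0 b0 Hb Ha Hb0) as DB.
assert (EA : Derive (fun a => L_bdpo beta a0 b0 a b0) a0 = beta * (-(1/2)) * (ln b0 / ((ln a0 + ln b0) * a0)))
  by (apply is_derive_unique; exact DA).
assert (EB : Derive (fun b => L_bdpo beta a0 b0 a0 b) b0 = beta * (1/2) * (ln a0 / ((ln a0 + ln b0) * b0)))
  by (apply is_derive_unique; exact DB).
rewrite EA, EB.
repeat split.
- eexists; exact DA.
- eexists; exact DB.
- assert (0 < ln a0 / ((ln a0 + ln b0) * b0)).
  { apply Rdiv_neg_neg; [lra|]. assert (0 < b0) by lra. nra. }
  nra.
- field; repeat split; try lra.
Qed.
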